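(* Let $X=\{x_1,\ldots,x_n\}$ be a set of quantum variables, $q=p_{22}$, and let $\Omega:\mathbf{k}\langle X\rangle\to Sh(W)$ be the algebra homomorphism with $\Omega(x_i)=(x_i)$. Let $m\ge 0$. If $[k]_q\neq0$ and $p_{12}p_{21}\neq q^{1-k}$ for all $1\le k\le m$, then, with $$\{x_1x_2^m\}=\frac{[x_1x_2^m]}{[m]_q!\prod_{s=0}^{m-1}(1-p_{12}p_{21}q^s)},\qquad \{x_2^mx_1\}=\frac{[x_2^mx_1]}{[m]_q!\prod_{s=0}^{m-1}(1-p_{12}p_{21}q^s)},$$ one has $$\Omega(\{x_1x_2^m\})=p_{21}^{-m}q^{\frac{m(1-m)}{2}}(x_2^mx_1),\qquad \Omega(\{x_2^mx_1\})=p_{12}^{-m}q^{\frac{m(1-m)}{2}}(x_1x_2^m).$$ Otherwise $\Omega([x_1x_2^m])=\Omega([x_2^mx_1])=0$.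
   Context: Quantum variables: each $x_i$ is associated with an element $g_i$ of an abelian group $G$ and a character $\chi^i:G\to\mathbf{k}^*$; $p_{ij}=\chi^i(g_j)$, and for words $u,v$, $p(u,v)$ is the bimultiplicative extension. Skew bracket in $\mathbf{k}\langle X\rangle$ for homogeneous $u,v$: $[u,v]=uv-p(u,v)vu$; $[x_1x_2^m]=[\ldots[[x_1,x_2],x_2],\ldots,x_2]$ and $[x_2^mx_1]=[x_2,[x_2,\ldots,[x_2,x_1]\ldots]]$ ($m$ copies of $x_2$). $Sh(W)$ is the tensor space of $W=\mathrm{span}(X)$ with basis the comonomials $(z_1\cdots z_m)$, $z_i\in X$, and the quantum shuffle product: $(u)(v)$ is the sum over all shuffles of the letters of $u$ and $v$ of the resulting comonomial weighted by the product of $p(b,a)^{-1}$ over all pairs with $a$ a letter of $u$, $b$ a letter of $v$, and $b$ placed before $a$. In particular $(w)(x_i)=\sum_{uv=w}p(x_i,v)^{-1}(ux_iv)$ and $(x_i)(w)=\sum_{uv=w}p(u,x_i)^{-1}(ux_iv)$. $[m]_q=1+q+\cdots+q^{m-1}$, $[m]_q!=\prod_{k=1}^m[k]_q$. *)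

(* Defs.v *)
From HB Require Import structures.
From mathcomp Require Import all_boot all_order all_algebra.
Set Implicit Arguments. Unset Strict Implicit. Unset Printing Implicit Defensive.
Import Order.TTheory GRing.Theory Num.Theory.
Local Open Scope ring_scope.

(* Quantum variables x_0..x_{n-1} are indexed by 'I_n.  The data (G, g_i, chi^i)
   enters only through the braiding matrix p i j = chi^i(g_j) (nonzero scalars). *)
Section QuantumShuffle.
Variables (k : fieldType) (n : nat) (p : 'I_n -> 'I_n -> k).

Definition word := seq 'I_n.

Definition pw (u v : word) : k := \prod_(i <- u) \prod_(j <- v) p i j.

(* Formal finite linear combinations of words; used both for k<X>
   (words = monomials) and for Sh(W) (words = comonomials).
   Two combinations are identified through their coefficient functions. *)
Definition lc := seq (k * word).
Definition coef (f : lc) (w : word) : k := \sum_(x <- f | x.2 == w) x.1.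

Definition lc_add (f g : lc) : lc := f ++ g.
Definition lc_scale (c : k) (f : lc) : lc := [seq (c * x.1, x.2) | x <- f].
Definition lc_sub (f g : lc) : lc := lc_add f (lc_scale (-1) g).
Definition mono (w : word) : lc := [:: (1, w)].
Definition var (i : 'I_n) : lc := mono [:: i].

Definition lc_mul (f g : lc) : lc := [seq (x.1 * y.1, x.2 ++ y.2) | x <- f, y <- g].

Definition skew (u : lc) (du : word) (v : lc) (dv : word) : lc :=
  lc_sub (lc_mul u v) (lc_scale (pw du dv) (lc_mul v u)).

(* [x_a x_b^m] = [...[[x_a,x_b],x_b],...,x_b] *)
Fixpoint brR (a b : 'I_n) (m : nat) : lc :=
  match m with
  | 0 => var a
  | m'.+1 => skew (brR a b m') (a :: nseq m' b) (var b) [:: b]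
  end.

(* [x_b^m x_a] = [x_b,[x_b,...,[x_b,x_a]...]] *)
Fixpoint brL (a b : 'I_n) (m : nat) : lc :=
  match m with
  | 0 => var a
  | m'.+1 => skew (var b) [:: b] (brL a b m') (nseq m' b ++ [:: a])
  end.

(* quantum shuffle of two comonomials: sum over shuffles, weighted by
   prod p(b,a)^-1 over pairs (a letter of u, b letter of v, b placed before a) *)
Fixpoint shuf (u : word) : word -> lc :=
  match u with
  | [::] => fun v => [:: (1, v)]
  | a :: u' => fix shuf_r (v : word) : lc :=
      match v with
      | [::] => [:: (1, a :: u')]
      | b :: v' =>
          [seq (x.1, a :: x.2) | x <- shuf u' v]
          ++ [seq ((pw [:: b] (a :: u'))^-1 * x.1, b :: x.2) | x <- shuf_r v']
      end
  end.

Definition sh_mul (F G : lc) : lc :=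
  flatten [seq [seq (x.1 * y.1 * z.1, z.2) | z <- shuf x.2 y.2] | x <- F, y <- G].

Definition Omega_word (w : word) : lc :=
  foldr (fun i acc => sh_mul (var i) acc) (mono [::]) w.
Definition Omega (f : lc) : lc :=
  flatten [seq lc_scale x.1 (Omega_word x.2) | x <- f].

Definition qint (q : k) (m : nat) : k := \sum_(i < m) q ^+ i.
Definition qfact (q : k) (m : nat) : k := \prod_(i < m) qint q i.+1.

End QuantumShuffle.

Arguments mono {k n} w.
Arguments var {k n} i.

(* Main.v *)
Require Import Defs.
From mathcomp Require Import all_boot all_order all_algebra.
From mathcomp Require Import ring.
Import GRing.Theory.
Local Open Scope ring_scope.

Section Aux.
Variables (k : fieldType) (n : nat) (p : 'I_n -> 'I_n -> k).
Hypothesis hp : forall i j, p i j != 0.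

Definition ev (f : lc k n) (phi : word n -> k) : k := \sum_(x <- f) x.1 * phi x.2.

Lemma ev_ext f phi psi : (forall z, phi z = psi z) -> ev f phi = ev f psi.
Proof. by move=> h; apply: eq_bigr => x _; rewrite h. Qed.

Lemma ev_add f phi psi : ev f (fun z => phi z + psi z) = ev f phi + ev f psi.
Proof. by rewrite /ev -big_split; apply: eq_bigr => x _; rewrite mulrDr. Qed.

Lemma ev_scal f c phi : ev f (fun z => c * phi z) = c * ev f phi.
Proof. by rewrite /ev mulr_sumr; apply: eq_bigr => x _; rewrite mulrCA. Qed.

Lemma ev_cat f g phi : ev (f ++ g) phi = ev f phi + ev g phi.
Proof. by rewrite /ev big_cat. Qed.

Lemma ev_lc_scale c f phi : ev (lc_scale c f) phi = c * ev f phi.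
Proof. by rewrite /ev /lc_scale big_map mulr_sumr; apply: eq_bigr => x _ /=; rewrite mulrA. Qed.

Lemma ev_sub f g phi : ev (lc_sub f g) phi = ev f phi - ev g phi.
Proof. by rewrite /lc_sub /lc_add ev_cat ev_lc_scale mulN1r. Qed.

Lemma ev_mono w phi : ev (mono w) phi = phi w.
Proof. by rewrite /ev big_cons big_nil /= mul1r addr0. Qed.

Lemma ev_var i phi : ev (var i) phi = phi [:: i].
Proof. exact: ev_mono. Qed.

Lemma ev_mul f g phi : ev (lc_mul f g) phi = ev f (fun u => ev g (fun v => phi (u ++ v))).
Proof.
rewrite /ev /lc_mul big_flatten big_map; apply: eq_bigr => x _.
rewrite big_map mulr_sumr; apply: eq_bigr => y _ /=; by rewrite mulrA.
Qed.

Lemma ev_mul_var_r f i phi : ev (lc_mul f (var i)) phi = ev f (fun u => phi (u ++ [:: i])).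
Proof. by rewrite ev_mul; apply: ev_ext => u; rewrite ev_var. Qed.

Lemma ev_mul_var_l f i phi : ev (lc_mul (var i) f) phi = ev f (fun v => phi (i :: v)).
Proof. by rewrite ev_mul ev_var. Qed.

Lemma ev_shmul F G phi : ev (sh_mul p F G) phi =
  ev F (fun u => ev G (fun v => ev (shuf p u v) phi)).
Proof.
rewrite /ev /sh_mul big_flatten /= big_flatten big_map; apply: eq_bigr => x _.
rewrite big_map mulr_sumr; apply: eq_bigr => y _ /=.
rewrite big_map mulr_sumr mulr_sumr; apply: eq_bigr => z _ /=; by rewrite !mulrA.
Qed.

Definition Om w phi := ev (Omega_word p w) phi.

Lemma ev_Omega f phi : ev (Omega p f) phi = ev f (fun w => Om w phi).
Proof.
rewrite /ev /Omega big_flatten big_map; apply: eq_bigr => x _.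
by rewrite -/(ev _ _) ev_lc_scale.
Qed.

Lemma coef_ev f w : coef f w = ev f (fun u => (u == w)%:R).
Proof.
rewrite /coef /ev big_mkcond; apply: eq_bigr => x _.
by case: (x.2 == w); rewrite ?mulr1 ?mulr0.
Qed.

Definition Lc c phi y := ev (shuf p [:: c] y) phi.
Definition Rb b phi y := ev (shuf p y [:: b]) phi.

Lemma pw11 i j : pw p [:: i] [:: j] = p i j.
Proof. by rewrite /pw !big_cons !big_nil mulr1 mulr1. Qed.

Lemma pw1 i w : pw p [:: i] w = \prod_(j <- w) p i j.
Proof. by rewrite /pw big_cons big_nil mulr1. Qed.

Lemma pwr u j : pw p u [:: j] = \prod_(i <- u) p i j.
Proof. by rewrite /pw; apply: eq_bigr => i _; rewrite big_cons big_nil mulr1. Qed.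

Lemma pw1_cons i d w : pw p [:: i] (d :: w) = p i d * pw p [:: i] w.
Proof. by rewrite !pw1 big_cons. Qed.

Lemma pw1_neq0 i w : pw p [:: i] w != 0.
Proof. rewrite pw1 prodf_seq_neq0; apply/allP => j _ /=; exact: hp. Qed.

Lemma Lc_nil c phi : Lc c phi [::] = phi [:: c].
Proof. by rewrite /Lc /ev big_cons big_nil /= mul1r addr0. Qed.

Lemma Lc_cons c phi d v : Lc c phi (d :: v) =
  phi [:: c, d & v] + (p d c)^-1 * Lc c (fun z => phi (d :: z)) v.
Proof.
rewrite /Lc.
have -> : shuf p [::c] (d::v) = (1, c::d::v) :: [seq ((pw p [::d] [::c])^-1 * x.1, d :: x.2) | x <- shuf p [::c] v] by [].
rewrite /ev big_cons /= mul1r big_map pw11 mulr_sumr; congr (_ + _).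
by apply: eq_bigr => x _ /=; rewrite mulrA.
Qed.

Lemma Rb_nil b phi : Rb b phi [::] = phi [:: b].
Proof. by rewrite /Rb /ev big_cons big_nil /= mul1r addr0. Qed.

Lemma Rb_cons b phi d u : Rb b phi (d :: u) =
  Rb b (fun z => phi (d :: z)) u + (pw p [:: b] (d :: u))^-1 * phi [:: b, d & u].
Proof.
rewrite /Rb.
have -> : shuf p (d::u) [::b] = [seq (x.1, d :: x.2) | x <- shuf p u [::b]] ++ [:: ((pw p [::b] (d::u))^-1 * 1, b :: d :: u)].
  by case: u.
by rewrite ev_cat /ev big_map big_cons big_nil /= mulr1 addr0.
Qed.

Lemma Lc_ext c phi psi y : (forall z, phi z = psi z) -> Lc c phi y = Lc c psi y.
Proof. exact: ev_ext. Qed.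
Lemma Rb_ext b phi psi y : (forall z, phi z = psi z) -> Rb b phi y = Rb b psi y.
Proof. exact: ev_ext. Qed.


Lemma Lc_add c phi psi y : Lc c (fun z => phi z + psi z) y = Lc c phi y + Lc c psi y.
Proof. exact: ev_add. Qed.
Lemma Lc_scal c a phi y : Lc c (fun z => a * phi z) y = a * Lc c phi y.
Proof. exact: ev_scal. Qed.
Lemma Rb_add c phi psi y : Rb c (fun z => phi z + psi z) y = Rb c phi y + Rb c psi y.
Proof. exact: ev_add. Qed.
Lemma Rb_scal c a phi y : Rb c (fun z => a * phi z) y = a * Rb c phi y.
Proof. exact: ev_scal. Qed.

Lemma Lc_pw b c phi u :
  Lc c (fun z => (pw p [:: b] z)^-1 * phi z) u = (pw p [:: b] (c :: u))^-1 * Lc c phi u.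
Proof.
elim: u phi => [|d u IH] phi; first by rewrite !Lc_nil.
rewrite !Lc_cons.
rewrite (@Lc_ext c _ (fun z => (p b d)^-1 * ((pw p [:: b] z)^-1 * phi (d :: z)))); last first.
  by move=> z; rewrite pw1_cons invfM mulrA.
rewrite Lc_scal IH.
rewrite !pw1_cons.
have h1 := hp b c; have h2 := hp b d; have h3 := pw1_neq0 b u.
by field; rewrite !hp h3.
Qed.

Lemma assocA b c phi y : Rb b (Lc c phi) y = Lc c (Rb b phi) y.
Proof.
elim: y phi => [|d u IH] phi.
  rewrite Rb_nil Lc_nil Lc_cons Lc_nil (Rb_cons b phi c [::]).
  by rewrite Rb_nil pw11 addrC.
rewrite (Rb_cons b (Lc c phi) d u).
rewrite (@Rb_ext b _ (fun z => phi [:: c, d & z] + (p d c)^-1 * Lc c (fun z' => phi (d :: z')) z)); last first.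
  by move=> z; rewrite Lc_cons.
rewrite Rb_add Rb_scal IH.
rewrite Lc_cons Lc_cons.
rewrite [Lc c (Rb b phi) _]Lc_cons.
rewrite (@Lc_ext c (fun z => Rb b phi (d :: z)) (fun z => Rb b (fun z' => phi (d :: z')) z + (p b d)^-1 * ((pw p [:: b] z)^-1 * phi [:: b, d & z]))); last first.
  by move=> z; rewrite (Rb_cons b phi d z) pw1_cons invfM mulrA.
rewrite Lc_add Lc_scal (@Lc_pw b c (fun z => phi [:: b, d & z])).
rewrite (Rb_cons b phi c (d :: u)) (Rb_cons b (fun z => phi (c :: z)) d u).
rewrite !pw1_cons.
have h1 := hp b c; have h2 := hp b d; have h3 := pw1_neq0 b u; have h4 := hp d c.
by field; rewrite !hp h3.
Qed.

Lemma Om_nil phi : Om [::] phi = phi [::].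
Proof. exact: ev_mono. Qed.

Lemma Om_ext w phi psi : (forall z, phi z = psi z) -> Om w phi = Om w psi.
Proof. exact: ev_ext. Qed.

Lemma Om_cons c w phi : Om (c :: w) phi = Om w (Lc c phi).
Proof.
rewrite /Om /=. rewrite ev_shmul ev_var. by [].
Qed.

Lemma Om_rcons w b phi : Om (w ++ [:: b]) phi = Om w (Rb b phi).
Proof.
elim: w phi => [|c w IH] phi /=.
  by rewrite Om_cons !Om_nil Lc_nil Rb_nil.
rewrite !Om_cons IH; apply: Om_ext => z; exact: assocA.
Qed.

Lemma qintS_r (x : k) m : qint x m.+1 = qint x m + x ^+ m.
Proof. by rewrite /qint big_ord_recr. Qed.

Lemma qintS_l (x : k) m : qint x m.+1 = 1 + x * qint x m.
Proof.
rewrite /qint big_ord_recl expr0 mulr_sumr; congr (_ + _).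
by apply: eq_bigr => i _; rewrite exprS.
Qed.

Lemma qint1 (x : k) : qint x 1 = 1.
Proof. by rewrite qintS_r /qint big_ord0 add0r expr0. Qed.

Lemma prod_nseq_const (F : 'I_n -> k) m c : \prod_(i <- nseq m c) F i = F c ^+ m.
Proof. by elim: m => [|m IH]; rewrite ?big_nil ?expr0 // big_cons IH exprS. Qed.

Variables (a b : 'I_n).
Let q := p b b.

Lemma q_neq0 : q != 0. Proof. exact: hp. Qed.

Lemma Lcb psi m : Lc b psi (nseq m b) = qint q^-1 m.+1 * psi (nseq m.+1 b).
Proof.
elim: m psi => [|m IH] psi; first by rewrite Lc_nil qint1 mul1r.
rewrite (Lc_cons b psi b (nseq m b)) IH (qintS_l _ m.+1).
rewrite mulrDl mul1r mulrA; by [].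
Qed.

Lemma Rbb psi m : Rb b psi (nseq m b) = qint q^-1 m.+1 * psi (nseq m.+1 b).
Proof.
elim: m psi => [|m IH] psi; first by rewrite Rb_nil qint1 mul1r.
rewrite (Rb_cons b psi b (nseq m b)) IH (qintS_r _ m.+1).
rewrite pw1 (prod_nseq_const _ m.+1) -exprVn mulrDl; by [].
Qed.

Lemma LcR phi m : Lc b phi (nseq m b ++ [:: a]) =
  qint q^-1 m.+1 * phi (nseq m.+1 b ++ [:: a]) + (p a b)^-1 * (q^-1) ^+ m * phi (nseq m b ++ [:: a; b]).
Proof.
elim: m phi => [|m IH] phi.
  by rewrite /= Lc_cons Lc_nil qint1 mul1r expr0 mulr1.
rewrite [nseq m.+1 b ++ _]/= (Lc_cons b phi b (nseq m b ++ [:: a])) IH (qintS_l _ m.+1).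
rewrite exprS /=; rewrite -/q. ring.
Qed.

Lemma RbR phi m : Rb b phi (nseq m b ++ [:: a]) =
  phi (nseq m b ++ [:: a; b]) + (p b a)^-1 * qint q^-1 m.+1 * phi (nseq m.+1 b ++ [:: a]).
Proof.
elim: m phi => [|m IH] phi.
  by rewrite /= (Rb_cons b phi a [::]) Rb_nil qint1 mulr1 pw11.
rewrite [nseq m.+1 b ++ _]/= (Rb_cons b phi b (nseq m b ++ [:: a])) IH (qintS_r _ m.+1).
rewrite pw1 big_cons big_cat /= prod_nseq_const big_cons big_nil mulr1 -/q.
rewrite !invfM -exprVn exprS /=. ring.
Qed.

Lemma LcL phi m : Lc b phi (a :: nseq m b) =
  phi [:: b, a & nseq m b] + (p a b)^-1 * qint q^-1 m.+1 * phi (a :: nseq m.+1 b).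
Proof. by rewrite Lc_cons Lcb mulrA. Qed.

Lemma RbL phi m : Rb b phi (a :: nseq m b) =
  qint q^-1 m.+1 * phi (a :: nseq m.+1 b) + (p b a * q ^+ m)^-1 * phi [:: b, a & nseq m b].
Proof.
rewrite (Rb_cons b phi a (nseq m b)) Rbb pw1 big_cons prod_nseq_const; by [].
Qed.

Fixpoint cc (u v : k) (m : nat) : k :=
  if m is m'.+1 then cc u v m' * qint q^-1 m * (v^-1 - u * q ^+ m') else 1.

Lemma MR m : forall phi, ev (brR p a b m) (fun w => Om w phi) = cc (p a b) (p b a) m * phi (nseq m b ++ [:: a]).
Proof.
elim: m => [|m IH] phi.
  by rewrite /= ev_var Om_cons Om_nil Lc_nil mul1r.
rewrite /= /Defs.skew ev_sub ev_lc_scale ev_mul_var_r ev_mul_var_l.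
rewrite (@ev_ext _ (fun u => Om (u ++ [:: b]) phi) (fun u => Om u (Rb b phi))); last by move=> u; rewrite Om_rcons.
rewrite (@ev_ext _ (fun u => Om (b :: u) phi) (fun u => Om u (Lc b phi))); last by move=> u; rewrite Om_cons.
rewrite !IH RbR LcR.
rewrite pwr big_cons prod_nseq_const -/q exprVn.
have h1 := hp a b; have h2 := hp b a; have h3 : q ^+ m != 0 by rewrite expf_neq0 // q_neq0.
rewrite /=. field. by rewrite h1 h2 h3.
Qed.

Lemma ML m : forall phi, ev (brL p a b m) (fun w => Om w phi) = cc (p b a) (p a b) m * phi (a :: nseq m b).
Proof.
elim: m => [|m IH] phi.
  by rewrite /= ev_var Om_cons Om_nil Lc_nil mul1r.
rewrite /= /Defs.skew ev_sub ev_lc_scale ev_mul_var_r ev_mul_var_l.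
rewrite (@ev_ext _ (fun u => Om (u ++ [:: b]) phi) (fun u => Om u (Rb b phi))); last by move=> u; rewrite Om_rcons.
rewrite (@ev_ext _ (fun u => Om (b :: u) phi) (fun u => Om u (Lc b phi))); last by move=> u; rewrite Om_cons.
rewrite !IH RbL LcL.
rewrite pw1 big_cat prod_nseq_const big_seq1 -/q.
have h1 := hp a b; have h2 := hp b a; have h3 : q ^+ m != 0 by rewrite expf_neq0 // q_neq0.
rewrite /=. field. by rewrite h1 h2 h3.
Qed.

Lemma qint_inv m : q ^+ m * qint q^-1 m.+1 = qint q m.+1.
Proof.
elim: m => [|m IH]; first by rewrite expr0 mul1r !qint1.
rewrite (qintS_r _ m.+1) (qintS_l q m.+1) -IH mulrDr exprVn mulfV ?expf_neq0 ?q_neq0 //.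
by rewrite exprS mulrA addrC.
Qed.

Lemma tri m : (m.+1 * (m.+1 - 1))./2 = ((m * (m - 1))./2 + m)%N.
Proof. by rewrite !subn1 -!bin2 binS bin1 addnC. Qed.

Lemma cc_closed u v m : v != 0 -> cc u v m =
  (v ^+ m)^-1 * (q ^+ (m * (m - 1))./2)^-1 * (qfact q m * \prod_(s < m) (1 - u * v * q ^+ s)).
Proof.
move=> hv; elim: m => [|m IH].
  by rewrite /= !expr0 invr1 /qfact !big_ord0 !mulr1.
rewrite /= IH tri /qfact !big_ord_recr /= -/(qfact q m) -qint_inv.
set T := (m * (m - 1))./2.
have h1 : q ^+ m != 0 by rewrite expf_neq0 // q_neq0.
have h2 : q ^+ T != 0 by rewrite expf_neq0 // q_neq0.
rewrite !exprS exprD !invfM.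
by field; rewrite h1 h2 hv expf_neq0.
Qed.
End Aux.

Theorem lemma3p2 (k : fieldType) (n : nat) (p : 'I_n -> 'I_n -> k)
  (hp : forall i j, p i j != 0) (a b : 'I_n) (hab : a != b) (m : nat) :
  let q := p b b in
  let D := qfact q m * \prod_(s < m) (1 - p a b * p b a * q ^+ s) in
  let good := forall j : nat, (1 <= j <= m)%N ->
                qint q j != 0 /\ p a b * p b a != (q ^+ j.-1)^-1 in
  (good ->
     (forall w, coef (Omega p (lc_scale D^-1 (brR p a b m))) w
        = coef (lc_scale ((p b a ^+ m)^-1 * (q ^+ (m * (m - 1))./2)^-1)
                         (mono (nseq m b ++ [:: a]))) w) /\
     (forall w, coef (Omega p (lc_scale D^-1 (brL p a b m))) w
        = coef (lc_scale ((p a b ^+ m)^-1 * (q ^+ (m * (m - 1))./2)^-1)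
                         (mono (a :: nseq m b))) w)) /\
  (~ good ->
     (forall w, coef (Omega p (brR p a b m)) w = 0) /\
     (forall w, coef (Omega p (brL p a b m)) w = 0)).
Proof.
move=> q D good.
have hq : q != 0 := hp b b.
have cR : cc _ _ p b (p a b) (p b a) m = ((p b a ^+ m)^-1 * (q ^+ (m * (m - 1))./2)^-1) * D.
  by rewrite (@cc_closed _ _ p hp b) ?hp.
have cL : cc _ _ p b (p b a) (p a b) m = ((p a b ^+ m)^-1 * (q ^+ (m * (m - 1))./2)^-1) * D.
  rewrite (@cc_closed _ _ p hp b) ?hp // /D; congr (_ * (_ * _)).
  by apply: eq_bigr => s _; rewrite (mulrC (p b a)).
have KR : forall w, coef (Omega p (brR p a b m)) w = cc _ _ p b (p a b) (p b a) m * ((nseq m b ++ [:: a]) == w)%:R.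
  by move=> w; rewrite coef_ev ev_Omega (@MR _ _ p hp a b m).
have KL : forall w, coef (Omega p (brL p a b m)) w = cc _ _ p b (p b a) (p a b) m * ((a :: nseq m b) == w)%:R.
  by move=> w; rewrite coef_ev ev_Omega (@ML _ _ p hp a b m).
have good_D : good -> D != 0.
  move=> hg; rewrite /D mulf_neq0 //.
    apply/prodf_neq0 => i _.
    by have [] := hg i.+1 (ltn_ord i).
  apply/prodf_neq0 => i _.
  have [_ h] := hg i.+1 (ltn_ord i).
  rewrite subr_eq0; apply: contra h => /eqP h1.
  apply/eqP; apply: (mulIf (expf_neq0 i hq)); rewrite /= mulVf ?expf_neq0 // -h1.
have D_good : D != 0 -> good.
  move=> hD j /andP [j1 jm]; case: j j1 jm => // i _ im.
  move: hD; rewrite /D mulf_eq0 negb_or => /andP [h1 h2]; split.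
    by move/prodf_neq0: h1 => /(_ (Ordinal im) isT).
  move/prodf_neq0: h2 => /(_ (Ordinal im) isT) /=.
  apply: contra => /eqP ->; rewrite mulVf ?subrr // expf_neq0 //; exact: hp.
split.
  move=> hg; have hD := good_D hg; split => w.
    rewrite coef_ev ev_Omega ev_lc_scale -ev_Omega -coef_ev KR cR coef_ev ev_lc_scale ev_mono.
    by rewrite -(mulrA _ D) mulrCA mulKf.
  rewrite coef_ev ev_Omega ev_lc_scale -ev_Omega -coef_ev KL cL coef_ev ev_lc_scale ev_mono.
  by rewrite -(mulrA _ D) mulrCA mulKf.
move=> hng.
have hD0 : D = 0.
  by case: (eqVneq D 0) => // hD; exfalso; apply: hng; apply: D_good.
by split => w; rewrite ?KR ?KL ?cR ?cL hD0 !mulr0 mul0r.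
Qed.
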